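(* Let $S$ be a finite alphabet, $X = S^{\mathbb{Z}}$ the full shift, and $f : X \to X$ a cellular automaton. Then the language of the asymptotic set $\mathcal{A}(f)$ is a $\Sigma^1_1$ set (identifying $S^*$ with $\mathbb{N}$ via a computable bijection).
   Context: A cellular automaton on $X = S^{\mathbb{Z}}$ (with the product topology) is a continuous map $f: X\to X$ commuting with the shift. The asymptotic set of $f$ is $\mathcal{A}(f) = \bigcup_{x \in X} \bigcap_{n \in \mathbb{N}} \overline{\bigcup_{k \geq n} \{f^k(x)\}}$, i.e. the union over all $x$ of the sets of limit points of the orbit of $x$. The language of a (not necessarily closed) set $Y \subseteq S^{\mathbb{Z}}$ is the set of words $w \in S^*$ such that $w = y_{[0,k-1]}$ for some $y \in Y$ and $k \in \mathbb{N}$. A set $P \subseteq \mathbb{N}$ is $\Sigma^1_1$ if it is definable by a formula with one existential set quantifier, no universal set quantifier and arbitrary number quantifiers; equivalently $w \in P \iff (\exists C \subseteq \mathbb{N})(\forall m \in \mathbb{N})(\exists \ell \in \mathbb{N}) R(C,m,\ell,w)$ for a recursive predicate $R$. *)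

(* Defs.v *)
From mathcomp Require Import all_boot all_order all_algebra.
Set Implicit Arguments. Unset Strict Implicit. Unset Printing Implicit Defensive.
Import GRing.Theory Num.Theory.

Definition config (S : finType) := int -> S.

Definition shift (S : finType) (x : config S) : config S :=
  fun i => x (i + 1)%R.

(* x and y agree on the window [-n, n] (basic cylinder neighbourhoods
   of the product topology, S discrete) *)
Definition agree (S : finType) (n : nat) (x y : config S) : Prop :=
  forall i : int, (`|i| <= n)%N -> x i = y i.

(* continuity for the product topology, unfolded through the cylinder basis *)
Definition cfg_continuous (S : finType) (f : config S -> config S) : Prop :=
  forall (x : config S) (n : nat), exists m : nat,
    forall y : config S, agree m x y -> agree n (f x) (f y).

Definition is_CA (S : finType) (f : config S -> config S) : Prop :=
  cfg_continuous f /\ forall x : config S, f (shift x) = shift (f x).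

(* y is a limit point of the orbit of x:
   y \in \bigcap_N closure {f^k x | k >= N} *)
Definition omega_limit (S : finType) (f : config S -> config S)
  (x y : config S) : Prop :=
  forall (n N : nat), exists k : nat, (N <= k)%N /\ agree n (iter k f x) y.

Definition asymptotic_set (S : finType) (f : config S -> config S)
  (y : config S) : Prop :=
  exists x : config S, omega_limit f x y.

Definition language (S : finType) (Y : config S -> Prop) (w : seq S) : Prop :=
  exists y : config S, Y y /\ w = mkseq (fun i => y (Posz i)) (size w).

(* computable bijection S^* -> N (for S nonempty): bijective base-|S|
   numeration, little endian, letters numbered 1..|S| via enum_rank *)
Definition word_code (S : finType) (w : seq S) : nat :=
  foldr (fun a acc => (nat_of_ord (enum_rank a)).+1 + #|S| * acc)%N 0%N w.

Inductive prf : Type :=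
| PZero
| PSucc
| PProj (i : nat)                (* i-th argument (0 if absent) *)
| POracle
| PComp (f : prf) (gs : list prf)
| PRec (f g : prf)
| PMu (f : prf).

Inductive prf_eval (C : nat -> bool) : prf -> list nat -> nat -> Prop :=
| ev_zero xs : prf_eval C PZero xs 0
| ev_succ xs : prf_eval C PSucc xs (head 0%N xs).+1
| ev_proj i xs : prf_eval C (PProj i) xs (nth 0%N xs i)
| ev_oracle xs : prf_eval C POracle xs (if C (head 0%N xs) then 1%N else 0%N)
| ev_comp f gs xs ys v :
    prf_evals C gs xs ys -> prf_eval C f ys v -> prf_eval C (PComp f gs) xs v
| ev_rec0 f g xs v : prf_eval C f xs v -> prf_eval C (PRec f g) (0%N :: xs) v
| ev_recS f g n xs u v :
    prf_eval C (PRec f g) (n :: xs) u -> prf_eval C g (n :: u :: xs) v ->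
    prf_eval C (PRec f g) (n.+1 :: xs) v
| ev_mu f xs n :
    prf_eval C f (n :: xs) 0%N ->
    (forall m, (m < n)%N -> exists k, k <> 0%N /\ prf_eval C f (m :: xs) k) ->
    prf_eval C (PMu f) xs n
with prf_evals (C : nat -> bool) : list prf -> list nat -> list nat -> Prop :=
| evs_nil xs : prf_evals C nil xs nil
| evs_cons g gs xs v vs :
    prf_eval C g xs v -> prf_evals C gs xs vs -> prf_evals C (g :: gs) xs (v :: vs).

(* a recursive predicate R(C, m, l, w) on 2^N x N^3: a code computing its
   characteristic function (value 1 = true) for every oracle and every input *)
Definition recursive_pred4 (e : prf) : Prop :=
  forall (C : nat -> bool) (m l w : nat),
    prf_eval C e [:: m; l; w] 0%N \/ prf_eval C e [:: m; l; w] 1%N.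

Definition Sigma11 (P : nat -> Prop) : Prop :=
  exists e : prf, recursive_pred4 e /\
    forall w : nat, P w <->
      exists C : nat -> bool, forall m : nat, exists l : nat,
        prf_eval C e [:: m; l; w] 1%N.

(* Main.v *)
Require Import Defs.
From mathcomp Require Import all_boot all_order all_algebra zify.
From Stdlib Require Import FunctionalExtensionality ClassicalEpsilon Classical.
Set Implicit Arguments. Unset Strict Implicit. Unset Printing Implicit Defensive.
Import GRing.Theory Num.Theory.

Inductive exp :=
| EVar (i : nat) | EConst (c : nat) | EAdd (a b : exp) | EMul (a b : exp)
| ESub (a b : exp) | EOra (a : exp) | ESum (b body : exp) | EProd (b body : exp).

Fixpoint eval (C : nat -> bool) (env : seq nat) (e : exp) : nat :=
  match e with
  | EVar i => nth 0%N env i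
  | EConst c => c
  | EAdd a b => (eval C env a + eval C env b)%N
  | EMul a b => (eval C env a * eval C env b)%N
  | ESub a b => (eval C env a - eval C env b)%N
  | EOra a => if C (eval C env a) then 1%N else 0%N
  | ESum b body => (\sum_(0 <= i < eval C env b) eval C (i :: env) body)%N
  | EProd b body => (\prod_(0 <= i < eval C env b) eval C (i :: env) body)%N
  end.

Fixpoint pconst c := match c with 0 => PZero | c'.+1 => PComp PSucc [:: pconst c'] end.
Definition padd := PRec (PProj 0) (PComp PSucc [:: PProj 1]).
Definition pmul := PRec PZero (PComp padd [:: PProj 1; PProj 2]).
Definition ppred := PRec PZero (PProj 0).
Definition psub := PRec (PProj 0) (PComp ppred [:: PProj 1]).

Definition projs a k := map PProj (iota a k).

Fixpoint compile (k : nat) (e : exp) : prf :=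
  match e with
  | EVar i => PProj i
  | EConst c => pconst c
  | EAdd a b => PComp padd [:: compile k a; compile k b]
  | EMul a b => PComp pmul [:: compile k a; compile k b]
  | ESub a b => PComp psub [:: compile k b; compile k a]
  | EOra a => PComp POracle [:: compile k a]
  | ESum b body => PComp (PRec PZero (PComp padd [:: PProj 1;
        PComp (compile k.+1 body) (PProj 0 :: projs 2 k)])) (compile k b :: projs 0 k)
  | EProd b body => PComp (PRec (pconst 1) (PComp pmul [:: PProj 1;
        PComp (compile k.+1 body) (PProj 0 :: projs 2 k)])) (compile k b :: projs 0 k)
  end.


Lemma pconst_ok C xs c : prf_eval C (pconst c) xs c.
Proof.
elim: c => [|c IH] /=; first exact: ev_zero.
apply: (ev_comp (ys := [:: c])); first by apply: evs_cons => //; apply: evs_nil.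
exact: ev_succ.
Qed.

Lemma ev2 C g1 g2 xs v1 v2 : prf_eval C g1 xs v1 -> prf_eval C g2 xs v2 ->
  prf_evals C [:: g1; g2] xs [:: v1; v2].
Proof. by move=> h1 h2; do 2!apply: evs_cons => //; apply: evs_nil. Qed.

Lemma ev1 C g1 xs v1 : prf_eval C g1 xs v1 -> prf_evals C [:: g1] xs [:: v1].
Proof. by move=> h1; apply: evs_cons => //; apply: evs_nil. Qed.

Lemma padd_ok C a b : prf_eval C padd [:: a; b] (a + b).
Proof.
elim: a => [|a IH]; first by rewrite add0n; apply: ev_rec0; exact: ev_proj.
apply: ev_recS IH _; apply: (ev_comp (ys := [:: a + b])); first by apply: ev1; exact: ev_proj.
by rewrite addSn; exact: ev_succ.
Qed.

Lemma pmul_ok C a b : prf_eval C pmul [:: a; b] (a * b).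
Proof.
elim: a => [|a IH]; first by rewrite mul0n; apply: ev_rec0; exact: ev_zero.
apply: ev_recS IH _; apply: (ev_comp (ys := [:: a * b; b])); first by apply: ev2; exact: ev_proj.
by rewrite mulSn addnC; exact: padd_ok.
Qed.

Lemma ppred_ok C a : prf_eval C ppred [:: a] a.-1.
Proof.

have h : forall n, prf_eval C ppred [:: n] n.-1.
  elim=> [|n IH]; first by apply: ev_rec0; exact: ev_zero.
  by apply: ev_recS IH _; exact: (ev_proj _ 0 [:: n; n.-1]).
exact: h.
Qed.

Lemma psub_ok C a b : prf_eval C psub [:: b; a] (a - b).
Proof.
elim: b => [|b IH]; first by rewrite subn0; apply: ev_rec0; exact: ev_proj.
apply: ev_recS IH _; apply: (ev_comp (ys := [:: a - b])); first by apply: ev1; exact: ev_proj.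
by rewrite subnS; exact: ppred_ok.
Qed.

Lemma projs_ok C a k xs :
  prf_evals C (projs a k) xs (map (nth 0%N xs) (iota a k)).
Proof.
elim: k a => [|k IH] a /=; first exact: evs_nil.
by apply: evs_cons; [exact: ev_proj | exact: IH].
Qed.

Lemma map_nth_iota0 (xs : seq nat) k : size xs = k -> map (nth 0%N xs) (iota 0 k) = xs.
Proof. by move=> <-; rewrite -/(mkseq _ _) mkseq_nth. Qed.

Lemma map_nth_iota2 (xs : seq nat) n u k : size xs = k ->
  map (nth 0%N [:: n, u & xs]) (iota 2 k) = xs.
Proof.
move=> hk; rewrite -(addn0 2) iotaDl -map_comp.
rewrite -[RHS](map_nth_iota0 hk); apply: eq_map => i /=; by rewrite add0n.
Qed.

Lemma compile_ok C e : forall k env, size env = k ->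
  prf_eval C (compile k e) env (eval C env e).
Proof.
elim: e => [i|c|a IHa b IHb|a IHa b IHb|a IHa b IHb|a IHa|b IHb body IHbody|b IHb body IHbody]
  k env hk /=.
- exact: ev_proj.
- exact: pconst_ok.
- apply: ev_comp; first by apply: ev2; [exact: IHa | exact: IHb].
  exact: padd_ok.
- apply: ev_comp; first by apply: ev2; [exact: IHa | exact: IHb].
  exact: pmul_ok.
- apply: ev_comp; first by apply: ev2; [exact: IHb | exact: IHa].
  exact: psub_ok.
- apply: ev_comp; first by apply: ev1; exact: IHa.
  exact: ev_oracle.
- apply: ev_comp.
    apply: evs_cons; first exact: IHb.
    exact: projs_ok.
  rewrite map_nth_iota0 //.
  elim: (eval C env b) => [|n IH]; first by rewrite big_geq //; apply: ev_rec0; exact: ev_zero.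
  apply: ev_recS IH _; rewrite big_nat_recr //=.
  apply: ev_comp; last exact: padd_ok.
  apply: ev2; first exact: ev_proj.
  apply: ev_comp; last first.
    apply: IHbody; by rewrite /= hk.
  apply: evs_cons; first exact: ev_proj.
  by have := projs_ok C 2 k [:: n, \sum_(0 <= i < n) eval C (i :: env) body & env]; rewrite map_nth_iota2.
- apply: ev_comp.
    apply: evs_cons; first exact: IHb.
    exact: projs_ok.
  rewrite map_nth_iota0 //.
  elim: (eval C env b) => [|n IH]; first by rewrite big_geq //; apply: ev_rec0; exact: (pconst_ok C _ 1).
  apply: ev_recS IH _; rewrite big_nat_recr //=.
  apply: ev_comp; last exact: pmul_ok.
  apply: ev2; first exact: ev_proj.
  apply: ev_comp; last first.
    apply: IHbody; by rewrite /= hk.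
  apply: evs_cons; first exact: ev_proj.
  by have := projs_ok C 2 k [:: n, \prod_(0 <= i < n) eval C (i :: env) body & env]; rewrite map_nth_iota2.
Qed.

Scheme prf_eval_ind2 := Induction for prf_eval Sort Prop
  with prf_evals_ind2 := Induction for prf_evals Sort Prop.

Fixpoint mufree (p : prf) : bool :=
  match p with
  | PComp f gs => mufree f && all mufree gs
  | PRec f g => mufree f && mufree g
  | PMu _ => false
  | _ => true
  end.

Lemma prf_det C : forall p xs v, prf_eval C p xs v -> mufree p ->
  forall v', prf_eval C p xs v' -> v = v'.
Proof.
apply: (prf_eval_ind2 (P := fun p xs v _ => mufree p -> forall v', prf_eval C p xs v' -> v = v')
                     (P0 := fun gs xs vs _ => all mufree gs -> forall vs', prf_evals C gs xs vs' -> vs = vs')).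
- by move=> xs _ v' h; inversion h.
- by move=> xs _ v' h; inversion h.
- by move=> i xs _ v' h; inversion h.
- by move=> xs _ v' h; inversion h.
- move=> f gs xs ys v hgs IHgs hf IHf /= /andP[mf mgs] v' h; clear hgs hf; inversion h; subst.
  have E := IHgs mgs _ ltac:(eassumption); subst; exact: IHf.
- move=> f g xs v hf IHf /= /andP[mf mg] v' h; clear hf; inversion h; subst; exact: IHf.
- move=> f g n xs u v h1 IH1 h2 IH2 /= mfg v' h; clear h1 h2; inversion h; subst.
  have E := IH1 mfg _ ltac:(eassumption); subst; apply: IH2; first by case/andP: mfg.
  eassumption.
- by [].
- by move=> xs _ vs' h; inversion h.
- move=> g gs xs v vs hg IHg hgs IHgs /= /andP[mg mgs] vs' h; clear hg hgs; inversion h; subst.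
  have E1 := IHg mg _ ltac:(eassumption); have E2 := IHgs mgs _ ltac:(eassumption).
  by rewrite E1 E2.
Qed.

Lemma mufree_compile k e : mufree (compile k e).
Proof.
have hp : forall a k, all mufree (projs a k) by move=> a k'; rewrite /projs all_map; apply/allP.
have hc : forall c, mufree (pconst c) by elim=> //= c ->.
elim: e k => //= [a IHa b IHb|a IHa b IHb|a IHa b IHb|a IHa|b IHb body IHbody|b IHb body IHbody] k;
  rewrite ?IHa ?IHb ?IHbody ?hp ?hc //.
Qed.

Fixpoint liftc (c : nat) (e : exp) : exp :=
  match e with
  | EVar i => EVar (if (i < c)%N then i else i.+1)
  | EConst n => EConst n
  | EAdd a b => EAdd (liftc c a) (liftc c b)
  | EMul a b => EMul (liftc c a) (liftc c b)
  | ESub a b => ESub (liftc c a) (liftc c b)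
  | EOra a => EOra (liftc c a)
  | ESum b body => ESum (liftc c b) (liftc c.+1 body)
  | EProd b body => EProd (liftc c b) (liftc c.+1 body)
  end.

Lemma eval_lftc C e : forall c env v, (c <= size env)%N ->
  eval C (take c env ++ v :: drop c env) (liftc c e) = eval C env e.
Proof.
elim: e => [i|n|a IHa b IHb|a IHa b IHb|a IHa b IHb|a IHa|b IHb body IHbody|b IHb body IHbody]
  c env v hc /=; rewrite ?IHa ?IHb //.
  rewrite nth_cat size_take_min (minn_idPl hc).
  case: (ltnP i c) => hi.
  + by rewrite hi nth_take.
  + rewrite ltnNge (leq_trans hi (leqnSn _)) /= subSn //=.
    by rewrite nth_drop subnKC.
- by apply: eq_bigr => i _; rewrite -(IHbody c.+1 (i :: env) v).
- by apply: eq_bigr => i _; rewrite -(IHbody c.+1 (i :: env) v).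
Qed.

Lemma evSum C env b body : eval C env (ESum b body) =
  (\sum_(0 <= i < eval C env b) eval C (i :: env) body)%N.
Proof. by []. Qed.
Lemma evProd C env b body : eval C env (EProd b body) =
  (\prod_(0 <= i < eval C env b) eval C (i :: env) body)%N.
Proof. by []. Qed.
Lemma evSub C env a b : eval C env (ESub a b) = (eval C env a - eval C env b)%N.
Proof. by []. Qed.
Lemma evAdd C env a b : eval C env (EAdd a b) = (eval C env a + eval C env b)%N.
Proof. by []. Qed.
Lemma evMul C env a b : eval C env (EMul a b) = (eval C env a * eval C env b)%N.
Proof. by []. Qed.

Definition lft := liftc 0.
Lemma eval_lft C e env v : eval C (v :: env) (lft e) = eval C env e.
Proof. by rewrite /lft -(eval_lftc C e v (leq0n (size env))) take0 drop0. Qed.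

Definition eeq a b := ESub (EConst 1) (EAdd (ESub a b) (ESub b a)).
Arguments eeq : simpl never.
Definition ele a b := ESub (EConst 1) (ESub a b).
Arguments ele : simpl never.
Lemma eval_eeq C env a b : eval C env (eeq a b) = (eval C env a == eval C env b).
Proof. rewrite /=; case: eqP => h; lia. Qed.
Lemma eval_ele C env a b : eval C env (ele a b) = (eval C env a <= eval C env b)%N.
Proof. rewrite /=; case: leqP => h; lia. Qed.

Definition tri n := (\sum_(0 <= i < n.+1) i)%N.
Definition pairn a b := (tri (a + b) + b)%N.
Definition diag n := (\sum_(0 <= t < n) ((tri t.+1) <= n)%N)%N.
Definition sndn n := (n - tri (diag n))%N.
Definition fstn n := (diag n - sndn n)%N.

Definition etri x := ESum (EAdd x (EConst 1)) (EVar 0).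
Arguments etri : simpl never.
Lemma eval_etri C env x : eval C env (etri x) = tri (eval C env x).
Proof. by rewrite /= addn1. Qed.
Definition epair a b := EAdd (etri (EAdd a b)) b.
Arguments epair : simpl never.
Lemma eval_epair C env a b : eval C env (epair a b) = pairn (eval C env a) (eval C env b).
Proof. by rewrite /epair /= addn1. Qed.
Definition ediag n := ESum n (ele (etri (EAdd (EVar 0) (EConst 1))) (lft n)).
Arguments ediag : simpl never.
Lemma eval_ediag C env n : eval C env (ediag n) = diag (eval C env n).
Proof.
rewrite /ediag evSum /diag; apply: eq_bigr => i _.
by rewrite eval_ele eval_etri eval_lft /= addn1.
Qed.
Definition esnd n := ESub n (etri (ediag n)).
Arguments esnd : simpl never.
Definition efst n := ESub (ediag n) (esnd n).
Arguments efst : simpl never.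
Lemma eval_esnd C env n : eval C env (esnd n) = sndn (eval C env n).
Proof. by rewrite /esnd evSub eval_etri eval_ediag. Qed.
Lemma eval_efst C env n : eval C env (efst n) = fstn (eval C env n).
Proof. by rewrite /efst evSub eval_esnd eval_ediag. Qed.

Lemma triS n : tri n.+1 = (tri n + n.+1)%N.
Proof. by rewrite /tri big_nat_recr. Qed.
Lemma tri_ge n : (n <= tri n)%N.
Proof. by case: n => // n; rewrite triS; lia. Qed.
Lemma tri_mono m n : (m <= n)%N -> (tri m <= tri n)%N.
Proof.
move=> /subnK <-; elim: (n - m)%N => // k IH.
by rewrite addSn triS; lia.
Qed.

Lemma diag_pair a b : diag (pairn a b) = (a + b)%N.
Proof.
rewrite /diag; set d := (a + b)%N; set n := pairn a b.
have hdn : (d <= n)%N by rewrite /n /pairn -/d; have := tri_ge d; lia.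
have key : forall t, ((tri t.+1 <= n) = (t < d))%N.
  move=> t; case: (ltnP t d) => ht.
  - by apply: leq_trans (tri_mono ht) _; rewrite /n /pairn -/d leq_addr.
  - apply/negbTE; rewrite -ltnNge; apply: leq_trans (tri_mono (ht : d.+1 <= t.+1)%N).
    by rewrite triS /n /pairn -/d; lia.
rewrite (big_cat_nat (leq0n d) hdn) /=.
rewrite (eq_big_nat _ _ (F2 := fun=> 1%N)); last by move=> i /andP[_ hi]; rewrite key hi.
rewrite [X in (_ + X)%N]big1_seq; last by move=> i /andP[_]; rewrite mem_index_iota => /andP[hi _]; rewrite key ltnNge hi.
by rewrite addn0 sum_nat_const_nat muln1 subn0.
Qed.

Lemma snd_pair a b : sndn (pairn a b) = b.
Proof. by rewrite /sndn diag_pair /pairn addKn. Qed.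
Lemma fst_pair a b : fstn (pairn a b) = a.
Proof. by rewrite /fstn snd_pair diag_pair addnK. Qed.
Lemma pairn_inj a b c d : pairn a b = pairn c d -> a = c /\ b = d.
Proof. by move=> h; have := congr1 fstn h; have := congr1 sndn h; rewrite !fst_pair !snd_pair. Qed.

Lemma agree_sym (T : finType) n (x y : config T) : agree n x y -> agree n y x.
Proof. by move=> h i hi; rewrite h. Qed.
Lemma agree_trans (T : finType) n (x y z : config T) : agree n x y -> agree n y z -> agree n x z.
Proof. by move=> h1 h2 i hi; rewrite h1 ?h2. Qed.
Lemma agree_le (T : finType) m n (x y : config T) : (m <= n)%N -> agree n x y -> agree m x y.
Proof. by move=> hmn h i hi; apply: h; apply: leq_trans hi hmn. Qed.

Lemma pigeon (T : finType) (Q : nat -> Prop) (h : nat -> T) :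
  (forall N, exists r, (N <= r)%N /\ Q r) ->
  exists t, forall N, exists r, (N <= r)%N /\ Q r /\ h r = t.
Proof.
move=> H; apply: NNPP => H1.
have H2 : forall t, exists N, forall r, (N <= r)%N -> Q r -> h r <> t.
  move=> t; apply: NNPP => H3; apply: H1; exists t => N; apply: NNPP => H4; apply: H3.
  exists N => r hr hq ht; apply: H4; by exists r.
pose Nf t := proj1_sig (constructive_indefinite_description _ (H2 t)).
have HN t : forall r, (Nf t <= r)%N -> Q r -> h r <> t.
  exact: (proj2_sig (constructive_indefinite_description _ (H2 t))).
have [r [hr hq]] := H (\max_(t : T) Nf t).
apply: (HN (h r) r) => //; apply: leq_trans hr; exact: (leq_bigmax (h r)).
Qed.

Lemma abs_cases (j : int) : j = Posz `|j|%N \/ j = GRing.opp (Posz `|j|%N).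
Proof. case: j => n; [by left | by right; rewrite NegzE]. Qed.

Definition good (T : finType) (u : nat -> config T) n (z : config T) :=
  forall N, exists r, (N <= r)%N /\ agree n (u r) z.

Lemma konig_step (T : finType) (u : nat -> config T) n z :
  good u n z -> exists z', agree n z z' /\ good u n.+1 z'.
Proof.
move=> hg.
have [[a b] hab] := pigeon (fun r => (u r (GRing.opp (Posz n.+1)), u r (Posz n.+1))) hg.
pose z' : config T := fun j => if j == GRing.opp (Posz n.+1) then a else if j == (Posz n.+1) then b else z j.
have hzz : agree n z z'.
  move=> j hj; rewrite /z'; case: eqP => [e|_]; first by move: hj; rewrite e; lia.
  case: eqP => [e|_] //; by move: hj; rewrite e /=; lia.
exists z'; split => // N; have [r [hr [hq /pair_equal_spec [ha hb]]]] := hab N.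
exists r; split => // j hj.
case: (leqP (`|j|%N) n) => hjn; first by rewrite hq // hzz.
have hjn1 : `|j|%N = n.+1 by lia.
rewrite /z'; case: (abs_cases j) => ->; rewrite hjn1.
- by rewrite (_ : (Posz n.+1) == GRing.opp (Posz n.+1) = false) ?eqxx //; apply/negbTE; rewrite -addr_eq0.
- by rewrite eqxx.
Qed.

Lemma konig (T : finType) (u : nat -> config T) : exists z, forall n, good u n z.
Proof.
have [t0 ht0] := pigeon (fun r => u r 0) (Q := fun _ => True) (fun N => ex_intro _ N (conj (leqnn N) I)).
pose z0 : config T := fun _ => t0.
have g0 : good u 0 z0.
  move=> N; have [r [hr [_ e]]] := ht0 N; exists r; split => // j hj.
  have -> : j = 0 by move: hj; case: j => // k; lia.
  by rewrite e.
have SF : forall n z, exists z', good u n z -> agree n z z' /\ good u n.+1 z'.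
  move=> n z; case: (classic (good u n z)) => h.
  - have [z' hz'] := konig_step h; by exists z'.
  - by exists z.
pose sf n z := proj1_sig (constructive_indefinite_description _ (SF n z)).
have hsf n z : good u n z -> agree n z (sf n z) /\ good u n.+1 (sf n z).
  exact: (proj2_sig (constructive_indefinite_description _ (SF n z))).
pose fix zs n := match n with 0 => z0 | n'.+1 => sf n' (zs n') end.
have gzs : forall n, good u n (zs n).
  elim=> // n IH; exact: (hsf n _ IH).2.
have azs : forall n m, (n <= m)%N -> agree n (zs n) (zs m).
  move=> n m /subnK <-; elim: (m - n)%N => [|k IH]; first by move=> i.
  rewrite addSn; apply: agree_trans IH _; apply: (agree_le (n := (k + n)%N)); first exact: leq_addl.
  exact: (hsf _ _ (gzs _)).1.
exists (fun j => zs `|j|%N j) => n.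
have hz : agree n (zs n) (fun j => zs `|j|%N j).
  by move=> j hj /=; rewrite (azs _ _ hj).
move=> N; have [r [hr hq]] := gzs n N; exists r; split => //; exact: agree_trans hq hz.
Qed.

Lemma unif (S : finType) (f : config S -> config S) : cfg_continuous f ->
  exists r, forall x y, agree r x y -> f x 0 = f y 0.
Proof.
move=> hc; apply: NNPP => H.
have H1 : forall r, exists p : config S * config S, agree r p.1 p.2 /\ f p.1 0 <> f p.2 0.
  move=> r; apply: NNPP => H2; apply: H; exists r => x y hxy; apply: NNPP => H3.
  by apply: H2; exists (x, y).
pose p r := proj1_sig (constructive_indefinite_description _ (H1 r)).
have hp r : agree r (p r).1 (p r).2 /\ f (p r).1 0 <> f (p r).2 0.
  exact: (proj2_sig (constructive_indefinite_description _ (H1 r))).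
have [z hz] := konig (fun r => (p r).1).
have [m hm] := hc z 0.
have [r [hr hq]] := hz m m.
have a1 : agree m z (p r).1 by apply: agree_sym.
have a2 : agree m z (p r).2 by apply: agree_trans a1 (agree_le hr (hp r).1).
apply: (hp r).2; by rewrite -(hm _ a1 0) // (hm _ a2 0).
Qed.

Definition tr (S : finType) (i : int) (z : config S) : config S := fun j => z (j + i)%R.

Lemma tr_shift_eq (S : finType) (f : config S -> config S) : is_CA f ->
  forall i z, f (tr i z) = tr i (f z).
Proof.
move=> [_ hs].
have tr0 : forall (z : config S), tr 0 z = z by move=> z; apply: functional_extensionality => j; rewrite /tr addr0.
have trS : forall (z : config S) (n : nat), tr (Posz n.+1) z = shift (tr n z).
  move=> z n; apply: functional_extensionality => j; rewrite /tr /shift; congr z.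
  by rewrite -addrA [(1 + _)%R]addrC -(addn1 n) PoszD.
have pos : forall n z, f (tr (Posz n) z) = tr (Posz n) (f z).
  elim=> [|n IH] z; first by rewrite !tr0.
  by rewrite !trS hs IH.
have trtr : forall a b (z : config S), tr a (tr b z) = tr (a + b) z.
  move=> a b z; apply: functional_extensionality => j; rewrite /tr; congr z.
  by rewrite addrA.
move=> i z; case: (abs_cases i) => ->; first exact: pos.
set n := `|i|%N.
have e : z = tr (Posz n) (tr (GRing.opp (Posz n)) z) by rewrite trtr subrr tr0.
rewrite {2}e pos trtr addrC subrr tr0 //.
Qed.

Lemma f_at (S : finType) (f : config S -> config S) : is_CA f ->
  forall i z, f z i = f (tr i z) 0.
Proof. by move=> hf i z; rewrite tr_shift_eq // /tr add0r. Qed.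

Definition code (S : finType) (a : S) : nat := index a (enum S).
Definition decode (S : finType) (a0 : S) (n : nat) : S := nth a0 (enum S) n.
Lemma decodeK (S : finType) (a0 a : S) : decode a0 (code a) = a.
Proof. by rewrite /decode /code nth_index // mem_enum. Qed.
Lemma code_lt (S : finType) (a : S) : (code a < #|S|)%N.
Proof. by rewrite /code cardE index_mem mem_enum. Qed.
Lemma codeK (S : finType) (a0 : S) n : (n < #|S|)%N -> code (decode a0 n) = n.
Proof. by move=> h; rewrite /code /decode index_uniq ?enum_uniq // -cardE. Qed.

Definition mk (S : finType) (a0 : S) (r : nat) (cs : seq nat) : config S :=
  fun j => decode a0 (nth 0%N cs `|(j + Posz r)%R|%N).
Definition window (S : finType) (z : config S) (i : int) (r : nat) : seq nat :=
  mkseq (fun t => code (z (i + (Posz t - Posz r))%R)) (r + r).+1.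

Lemma local (S : finType) (f : config S -> config S) (a0 : S) r : is_CA f ->
  (forall x y, agree r x y -> f x 0 = f y 0) ->
  forall z i, f z i = f (mk a0 r (window z i r)) 0.
Proof.
move=> hf hr z i; rewrite (f_at hf); apply: hr => j hj.
rewrite /tr /mk /window nth_mkseq; last by lia.
rewrite decodeK; congr z.
have -> : Posz `|(j + Posz r)%R|%N = (j + Posz r)%R by lia.
by rewrite addrK addrC.
Qed.

Lemma evOra C env a : eval C env (EOra a) = C (eval C env a).
Proof. by rewrite /=; case: (C _). Qed.

Definition addrn k p q j := pairn (pairn k (pairn (p - q) (q - p))) j.
Definition eaddr k p q j := epair (epair k (epair (ESub p q) (ESub q p))) j.
Arguments eaddr : simpl never.
Lemma eval_eaddr C env k p q j : eval C env (eaddr k p q j) =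
  addrn (eval C env k) (eval C env p) (eval C env q) (eval C env j).
Proof. by rewrite /eaddr !eval_epair !evSub. Qed.

Definition symn (s : nat) (C : nat -> bool) k p q :=
  (\sum_(0 <= j < s.-1) C (addrn k p q j))%N.
Definition esym s k p q := ESum (EConst s.-1) (EOra (eaddr (lft k) (lft p) (lft q) (EVar 0))).
Arguments esym : simpl never.
Lemma eval_esym s C env k p q : eval C env (esym s k p q) =
  symn s C (eval C env k) (eval C env p) (eval C env q).
Proof.
rewrite /esym evSum /symn; apply: eq_bigr => j _.
by rewrite evOra eval_eaddr !eval_lft.
Qed.
Lemma symn_lt s C k p q : (symn s C k p q <= s.-1)%N.
Proof.
rewrite /symn; apply: (@leq_trans (\sum_(0 <= j < s.-1) 1)%N); first by apply: leq_sum => i _; case: (C _).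
by rewrite sum_nat_const_nat muln1 subn0.
Qed.

Fixpoint tab (s : nat) (cs : seq exp) (G : seq nat -> nat) : exp :=
  match cs with
  | [::] => EConst (G [::])
  | c :: cs' => foldr (fun j acc => EAdd (EMul (eeq c (EConst j)) (tab s cs' (fun t => G (j :: t)))) acc)
                 (EConst 0) (iota 0 s)
  end.

Lemma eval_foldr_sel C env c (X : nat -> exp) js : uniq js ->
  eval C env (foldr (fun j acc => EAdd (EMul (eeq c (EConst j)) (X j)) acc) (EConst 0) js) =
  if eval C env c \in js then eval C env (X (eval C env c)) else 0%N.
Proof.
elim: js => [|j js IH] /=; first by []. move=> /andP[hj hu].
rewrite IH // in_cons; case: (eqVneq (eval C env c) j) => [e|/eqP ne].
  by rewrite e (negbTE hj) subnn /=; lia.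
have -> : (1 - (eval C env c - j + (j - eval C env c)) = 0)%N by lia.
by rewrite mul0n add0n.
Qed.

Lemma eval_tab s C env cs : forall G, all (fun c => eval C env c < s)%N cs ->
  eval C env (tab s cs G) = G (map (eval C env) cs).
Proof.
elim: cs => //= c cs IH G /andP[hc hcs].
by rewrite eval_foldr_sel ?iota_uniq // mem_iota /= hc IH.
Qed.

Definition eall b body := eeq (ESum b (ESub (EConst 1) body)) (EConst 0).
Arguments eall : simpl never.
Lemma eval_eall C env b body : (forall i, eval C (i :: env) body <= 1)%N ->
  eval C env (eall b body) = all (fun i => eval C (i :: env) body == 1%N) (iota 0 (eval C env b)).
Proof.
move=> h; rewrite /eall eval_eeq evSum /=; congr nat_of_bool.
elim: (eval C env b) => [|n IH]; first by rewrite big_geq.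
rewrite big_nat_recr // -[n.+1]addn1 iotaD all_cat /= andbT -IH addn_eq0.
by congr (_ && _); have := h n; case: (eval C (n :: env) body) => [|[|]].
Qed.

Definition check0 s r (F : seq nat -> nat) (rest : exp) :=
  let k := efst rest in let pq := esnd rest in let p := efst pq in let q := esnd pq in
  eeq (esym s (EAdd k (EConst 2)) p q)
      (tab s (map (fun t => esym s (EAdd k (EConst 1)) (EAdd p (EConst t)) (EAdd q (EConst r)))
                  (iota 0 (r + r).+1)) F).
Arguments check0 : simpl never.

Definition check1 s (rest : exp) (l : exp) :=
  EMul (ele (esnd rest) l)
   (eall (EAdd (efst rest) (EConst 1))
     (EMul (eeq (esym s (EAdd (lft l) (EConst 1)) (EVar 0) (EConst 0)) (esym s (EConst 0) (EVar 0) (EConst 0)))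
           (eeq (esym s (EAdd (lft l) (EConst 1)) (EConst 0) (EVar 0)) (esym s (EConst 0) (EConst 0) (EVar 0))))).
Arguments check1 : simpl never.

Definition check2 s (l w : exp) :=
  eeq (ESum l (EMul (EAdd (esym s (EConst 0) (EVar 0) (EConst 0)) (EConst 1)) (EProd (EVar 0) (EConst s)))) w.
Arguments check2 : simpl never.

Definition Rexp s r F :=
  let t := efst (EVar 0) in let rest := esnd (EVar 0) in
  EAdd (EAdd (EMul (eeq t (EConst 0)) (check0 s r F rest))
             (EMul (eeq t (EConst 1)) (check1 s rest (EVar 1))))
       (EMul (ele (EConst 2) t) (check2 s (EVar 1) (EVar 2))).
Arguments Rexp : simpl never.

Definition c0sem s r F C rest :=
  let k := fstn rest in let p := fstn (sndn rest) in let q := sndn (sndn rest) in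
  symn s C k.+2 p q == F [seq symn s C k.+1 (p + t) (q + r) | t <- iota 0 (r + r).+1].
Definition c1sem s C rest l :=
  (sndn rest <= l) && all (fun i => (symn s C l.+1 i 0 == symn s C 0 i 0) &&
                                   (symn s C l.+1 0 i == symn s C 0 0 i)) (iota 0 (fstn rest).+1).
Definition c2sem s C l w :=
  (\sum_(0 <= i < l) (symn s C 0 i 0 + 1) * s ^ i == w)%N.

Definition Rsem s r F C m l w : bool :=
  if fstn m == 0 then c0sem s r F C (sndn m)
  else if fstn m == 1 then c1sem s C (sndn m) l
  else c2sem s C l w.

Lemma evConst C env c : eval C env (EConst c) = c. Proof. by []. Qed.
Lemma evVar C env i : eval C env (EVar i) = nth 0%N env i. Proof. by []. Qed.

Lemma eval_check0 s r F C env rest : (0 < s)%N ->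
  eval C env (check0 s r F rest) = c0sem s r F C (eval C env rest).
Proof.
move=> hs; rewrite /check0 eval_eeq eval_esym eval_tab.
  rewrite evAdd !eval_efst !eval_esnd evConst -map_comp /c0sem; congr (nat_of_bool (_ == F _)).
    by rewrite addn2.
  apply: eq_map => t; rewrite /comp eval_esym !evAdd !eval_efst !eval_esnd !evConst addn1.
  by [].
rewrite all_map; apply/allP => t _.
change (eval C env (esym s (EAdd (efst rest) (EConst 1)) (EAdd (efst (esnd rest)) (EConst t)) (EAdd (esnd (esnd rest)) (EConst r))) < s)%N.
rewrite eval_esym; apply: leq_ltn_trans (symn_lt _ _ _ _ _) _.
by rewrite prednK.
Qed.

Lemma eval_check1 s C env rest l :
  eval C env (check1 s rest l) = c1sem s C (eval C env rest) (eval C env l).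
Proof.
rewrite /check1 evMul eval_ele eval_esnd.
rewrite eval_eall; last first.
  by move=> i; rewrite evMul !eval_eeq; case: (_ == _); case: (_ == _).
rewrite evAdd eval_efst evConst /c1sem addn1 mulnb; congr (nat_of_bool (_ && all _ _)).
apply: functional_extensionality => i.
rewrite evMul !eval_eeq !eval_esym !evAdd !eval_lft !evConst !evVar /= addn1.
by rewrite mulnb; case: (_ && _).
Qed.

Lemma eval_check2 s C env l w :
  eval C env (check2 s l w) = c2sem s C (eval C env l) (eval C env w).
Proof.
rewrite /check2 eval_eeq evSum /c2sem; congr (nat_of_bool (_ == _)); apply: eq_bigr => i _.
rewrite evMul evAdd eval_esym evProd !evConst evVar /= prod_nat_const_nat subn0.
by [].
Qed.

Lemma eval_R s r F C m l w : (0 < s)%N ->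
  eval C [:: m; l; w] (Rexp s r F) = Rsem s r F C m l w.
Proof.
move=> hs.
rewrite /Rexp !evAdd [eval _ _ (EMul _ (check0 _ _ _ _))]evMul [eval _ _ (EMul _ (check1 _ _ _))]evMul [eval _ _ (EMul _ (check2 _ _ _))]evMul eval_check0 // eval_check1 eval_check2 !eval_eeq eval_ele !eval_efst !eval_esnd !evConst !evVar /=.
rewrite /Rsem; case: eqP => [->|h0] /=; first by rewrite mul1n !addn0.
case: eqP => [->|h1] /=; first by rewrite mul0n mul1n add0n addn0.
have -> : (2 <= fstn m)%N by lia.
by rewrite mul1n.
Qed.

Lemma code_rank (S : finType) (a : S) : nat_of_ord (enum_rank a) = code a.
Proof.
rewrite /enum_rank enum_rank_in.unlock insubdK //.
by rewrite unfold_in /= cardE index_mem mem_enum.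
Qed.

Lemma word_code_mkseq (S : finType) (g : nat -> S) l :
  word_code (mkseq g l) = (\sum_(0 <= i < l) (code (g i) + 1) * #|S| ^ i)%N.
Proof.
elim: l g => [|l IH] g; first by rewrite big_geq.
rewrite /mkseq /= -/(mkseq _ _).
rewrite (_ : [seq g i | i <- iota 1 l] = mkseq (fun i => g i.+1) l); last first.
  by rewrite /mkseq -(addn0 1) iotaDl -map_comp.
rewrite IH code_rank big_nat_recl // expn0 muln1 addn1; congr (_ + _)%N.
rewrite big_distrr; apply: eq_bigr => i _ /=.
by rewrite expnS; lia.
Qed.

Lemma sum_lt (n c : nat) : (c <= n)%N -> (\sum_(0 <= j < n) (j < c))%N = c.
Proof.
move=> hc; rewrite (big_cat_nat (leq0n c) hc) /=.
rewrite (eq_big_nat _ _ (F2 := fun=> 1%N)); last by move=> i /andP[_ hi]; rewrite hi.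
rewrite [X in (_ + X)%N]big1_seq; last by move=> i /andP[_]; rewrite mem_index_iota => /andP[hi _]; rewrite ltnNge hi.
by rewrite addn0 sum_nat_const_nat muln1 subn0.
Qed.

Definition ipos (i : int) : nat := match i with Posz n => n | Negz _ => 0 end.
Definition ineg (i : int) : nat := match i with Posz _ => 0 | Negz n => n.+1 end.
Lemma iposneg (i : int) : i = (Posz (ipos i) - Posz (ineg i))%R.
Proof. case: i => n /=; [by rewrite subr0 | by rewrite NegzE sub0r]. Qed.
Lemma ipn0 (i : int) : ipos i = 0%N \/ ineg i = 0%N.
Proof. by case: i => n /=; [right|left]. Qed.

Lemma pq_canon (p q : nat) : ipos (Posz p - Posz q)%R = (p - q)%N /\ ineg (Posz p - Posz q)%R = (q - p)%N.
Proof.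
set i := (Posz p - Posz q)%R; have := iposneg i; rewrite {1}/i.
case: i => n /= e; lia.
Qed.

Definition symi s C k (i : int) := symn s C k (ipos i) (ineg i).
Lemma symn_i s C k p q : symn s C k p q = symi s C k (Posz p - Posz q)%R.
Proof. rewrite /symi; have [-> ->] := pq_canon p q; rewrite /symn /addrn; apply: eq_bigr => j _; have -> : (p - q - (q - p) = p - q)%N by lia. have -> : (q - p - (p - q) = q - p)%N by lia. by []. Qed.

Definition Fl (S : finType) (f : config S -> config S) (a0 : S) r (cs : seq nat) : nat :=
  code (f (mk a0 r cs) 0).
Definition cfgOf (S : finType) (a0 : S) C k : config S := fun i => decode a0 (symi #|S| C k i).

Lemma symi_lt (S : finType) (a0 : S) C k i : (symi #|S| C k i < #|S|)%N.
Proof.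
apply: leq_ltn_trans (symn_lt _ _ _ _ _) _.
have : (0 < #|S|)%N by apply/card_gt0P; exists a0.
by case: #|S|.
Qed.

Lemma sound (S : finType) (f : config S -> config S) (hf : is_CA f) (a0 : S) r
  (hr : forall x y, agree r x y -> f x 0 = f y 0) C w :
  (forall m, exists l, Rsem #|S| r (Fl f a0 r) C m l w) ->
  exists ws, language (asymptotic_set f) ws /\ word_code ws = w.
Proof.
move=> H.
have step : forall k i, cfgOf a0 C k.+2 i = f (cfgOf a0 C k.+1) i.
  move=> k i.
  have [l hl] := H (pairn 0 (pairn k (pairn (ipos i) (ineg i)))).
  move: hl; rewrite /Rsem fst_pair snd_pair /= /c0sem !(fst_pair, snd_pair) => /eqP e.
  rewrite (local a0 hf hr) /cfgOf /symi e /Fl decodeK; congr (f (mk a0 r _) 0).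
  rewrite /window /mkseq; apply: eq_map => t.
  rewrite codeK ?symi_lt // -/(symi _ _ _ _) symn_i; congr symi.
  have E := iposneg i; lia.
have hit : forall k, cfgOf a0 C k.+1 = iter k f (cfgOf a0 C 1).
  elim=> // k IH; rewrite iterS -IH; apply: functional_extensionality => i; exact: step.
have homega : omega_limit f (cfgOf a0 C 1) (cfgOf a0 C 0).
  move=> n N; have [l hl] := H (pairn 1 (pairn n N)).
  move: hl; rewrite /Rsem fst_pair snd_pair /= /c1sem !(fst_pair, snd_pair) => /andP[hN /allP ha].
  exists l; split => // j hj; rewrite -hit /cfgOf.
  have hj' : j = Posz `|j|%N \/ j = (- Posz `|j|%N)%R := abs_cases j.
  move: hj hj'; set a := `|j|%N => hj hj'.
  have /ha /andP[/eqP e1 /eqP e2] : (a \in iota 0 n.+1) by rewrite mem_iota; lia.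
  move: e1 e2; rewrite !symn_i subr0 sub0r => e1 e2.
  by case: hj' => ->; [rewrite e1 | rewrite e2].
have [l hl] := H (pairn 2 0).
move: hl; rewrite /Rsem fst_pair snd_pair /= /c2sem => /eqP e.
exists (mkseq (fun i => cfgOf a0 C 0 (Posz i)) l); split.
  exists (cfgOf a0 C 0); split; first by exists (cfgOf a0 C 1).
  by rewrite size_mkseq.
rewrite word_code_mkseq -e; apply: eq_bigr => i _.
by rewrite /cfgOf codeK ?symi_lt // symn_i subr0.
Qed.

Definition want (S : finType) (f : config S -> config S) (x y : config S) k (i : int) : nat :=
  code (match k with 0 => y i | k'.+1 => iter k' f x i end).

Definition Cof (S : finType) (f : config S -> config S) (x y : config S) (a : nat) : bool :=
  if excluded_middle_informative
       (exists k i j, a = addrn k (ipos i) (ineg i) j /\ (j < want f x y k i)%N)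
  then true else false.

Lemma Cof_sym (S : finType) (f : config S -> config S) (x y : config S) k p q :
  symn #|S| (Cof f x y) k p q = want f x y k (Posz p - Posz q)%R.
Proof.
set i := (Posz p - Posz q)%R.
have hw : (want f x y k i <= #|S|.-1)%N.
  have := code_lt (match k with 0 => y i | k'.+1 => iter k' f x i end).
  rewrite /want; case: #|S| => // n _; lia.
rewrite /symn -(sum_lt hw); apply: eq_bigr => j _.
have ea : addrn k p q j = addrn k (ipos i) (ineg i) j.
  have [e1 e2] := pq_canon p q; have e1' : ipos i = (p - q)%N := e1; have e2' : ineg i = (q - p)%N := e2.
  rewrite /addrn e1' e2'; have -> : (p - q - (q - p) = p - q)%N by lia. by have -> : (q - p - (p - q) = q - p)%N by lia.
rewrite /Cof; case: excluded_middle_informative => [Hex|hn].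
  have [k' [i' [j' [e hj']]]] := Hex.
  rewrite ea /addrn in e; have [E1 ej] := pairn_inj e.
  have [ek E2] := pairn_inj E1; have [e3 e4] := pairn_inj E2.
  have e5 : ipos i = ipos i' by have [h1|h1] := ipn0 i; have [h2|h2] := ipn0 i'; lia.
  have e6 : ineg i = ineg i' by have [h1|h1] := ipn0 i; have [h2|h2] := ipn0 i'; lia.
  have ei : i = i' by rewrite (iposneg i) (iposneg i') e5 e6.
  by rewrite /= ek ei ej hj'.
case: ltnP => // hj; exfalso; apply: hn; by exists k, i, j.
Qed.

Lemma complete (S : finType) (f : config S -> config S) (hf : is_CA f) (a0 : S) r
  (hr : forall x y, agree r x y -> f x 0 = f y 0) w ws x y :
  omega_limit f x y -> ws = mkseq (fun i => y (Posz i)) (size ws) -> word_code ws = w ->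
  exists C, forall m, exists l, Rsem #|S| r (Fl f a0 r) C m l w.
Proof.
move=> homega hws hw; exists (Cof f x y) => m.
rewrite /Rsem; case: eqP => [h0|h0].
  exists 0%N; rewrite /c0sem !Cof_sym /want iterS (local a0 hf hr) /Fl; apply/eqP.
  congr (code (f (mk a0 r _) 0)); rewrite /window /mkseq; apply: eq_map => t.
  rewrite Cof_sym /want; congr (code (iter _ f x _)); lia.
case: eqP => [h1|h1].
  have [k [hk ha]] := homega (fstn (sndn m)) (sndn (sndn m)).
  exists k; rewrite /c1sem hk andTb; apply/allP => a; rewrite mem_iota => /andP[_ han].
  rewrite !Cof_sym /want subr0 sub0r !ha //=; lia.
exists (size ws); rewrite /c2sem -hw {2}hws word_code_mkseq; apply/eqP; apply: eq_bigr => i _.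
by rewrite Cof_sym /want subr0.
Qed.

Lemma sigma_of_exp (e : exp) (P : nat -> Prop) :
  (forall C m l w, eval C [:: m; l; w] e <= 1)%N ->
  (forall w, P w <-> exists C, forall m, exists l, eval C [:: m; l; w] e = 1%N) ->
  Sigma11 P.
Proof.
move=> h1 hP; exists (compile 3 e); split.
  move=> C m l w; have := compile_ok C e (env := [:: m; l; w]) (erefl 3).
  by have := h1 C m l w; case: (eval _ _ _) => [|[|]] // _ H; [left|right].
move=> w; rewrite hP; split => [[C HC]|[C HC]]; exists C => m; have [l hl] := HC m; exists l.
  by have := compile_ok C e (env := [:: m; l; w]) (erefl 3); rewrite hl.
exact: (prf_det (compile_ok C e (env := [:: m; l; w]) (erefl 3)) (mufree_compile _ _) hl).
Qed.

Theorem lemma1 (S : finType) (f : config S -> config S) (hf : is_CA f) :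
  Sigma11 (fun n : nat =>
    exists w : seq S, language (asymptotic_set f) w /\ word_code w = n).
Proof.
case: (pickP (@predT S)) => [a0 _|h0].
- have [r hr] := unif hf.1.
  apply: (sigma_of_exp (e := Rexp #|S| r (Fl f a0 r))).
    by move=> C m l w; rewrite eval_R //; [case: (Rsem _ _ _ _ _ _ _) | apply/card_gt0P; exists a0].
  have hs : (0 < #|S|)%N by apply/card_gt0P; exists a0.
  move=> w; split.
    move=> [ws [[y [[x hx] hws]] hw]].
    have [C HC] := complete hf a0 hr hx hws hw.
    exists C => m; have [l hl] := HC m; exists l; by rewrite eval_R // hl.
  move=> [C HC]; apply: (sound hf (a0 := a0) hr (C := C)) => m.
  have [l hl] := HC m; exists l; move: hl; rewrite eval_R //; by case: (Rsem _ _ _ _ _ _ _).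
- apply: (sigma_of_exp (e := EConst 0)) => // w; split.
    by move=> [ws [[y _] _]]; have := h0 (y 0).
  by move=> [C HC]; have [l hl] := HC 0%N.
Qed.
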